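(* Let $q$ be a prime power. For any real $R$ with $0 \leq R \leq \frac{1}{2}\log_q\!\left(\frac{q^2}{q^2-q+1}\right)$, there exists an infinite sequence of minimal linear $[n,k]$ codes over $\mathbb{F}_q$ (with lengths $n$ unbounded) whose rates $k/n$ attain $R$ (i.e. $k/n \to R$ along the sequence, with $k/n \le \frac{1}{2}\log_q\!\left(\frac{q^2}{q^2-q+1}\right)$).
   Context: A linear $[n,k]$ code over $\mathbb{F}_q$ is a $k$-dimensional subspace of $\mathbb{F}_q^n$; its rate is $k/n$. The support of $c \in \mathbb{F}_q^n$ is $\mathrm{supp}(c) = \{ i \in \{1,\dots,n\} : c_i \neq 0\}$. A codeword $c \in C$ is minimal if for every $c' \in C$, $\mathrm{supp}(c') \subseteq \mathrm{supp}(c)$ implies that $c$ and $c'$ are linearly dependent. A linear code $C$ is minimal if every nonzero codeword of $C$ is minimal. *)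

(* Defs.v *)
From HB Require Import structures.
From mathcomp Require Import all_boot all_order all_algebra.
From mathcomp Require Import all_classical all_reals all_analysis.
Set Implicit Arguments. Unset Strict Implicit. Unset Printing Implicit Defensive.
Import Order.TTheory GRing.Theory Num.Theory.
Local Open Scope ring_scope.

Definition supp (F : fieldType) (n : nat) (c : 'rV[F]_n) : {set 'I_n} :=
  [set i | c 0 i != 0].

Definition lin_dep (F : fieldType) (n : nat) (c c' : 'rV[F]_n) : Prop :=
  exists a b : F, ((a != 0) || (b != 0)) /\ a *: c + b *: c' = 0.

Definition minimal_codeword (F : fieldType) (n : nat)
    (C : {vspace 'rV[F]_n}) (c : 'rV[F]_n) : Prop :=
  c \in C /\
  forall c' : 'rV[F]_n, c' \in C -> supp c' \subset supp c -> lin_dep c c'.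

Definition minimal_code (F : fieldType) (n : nat) (C : {vspace 'rV[F]_n}) : Prop :=
  forall c : 'rV[F]_n, c \in C -> c != 0 -> minimal_codeword C c.

Definition rate (T : realType) (F : fieldType) (n : nat) (C : {vspace 'rV[F]_n}) : T :=
  (\dim C)%:R / n%:R.

Definition logb (T : realType) (q x : T) : T := ln x / ln q.

Definition rate_bound (T : realType) (q : nat) : T :=
  2^-1 * logb q%:R ((q%:R ^+ 2) / (q%:R ^+ 2 - q%:R + 1)).

(* Main.v *)
Require Import Defs.
From HB Require Import structures.
From mathcomp Require Import all_boot all_order all_algebra.
From mathcomp Require Import all_classical all_reals all_analysis.
From mathcomp Require Import ring lra zify.
From Stdlib Require Import Lia.
Import Order.TTheory GRing.Theory Num.Theory.
Import numFieldNormedType.Exports.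
Local Open Scope ring_scope.

Section Helpers.
Set Implicit Arguments. Unset Strict Implicit. Unset Printing Implicit Defensive.
Section Comb.
Variable F : finFieldType.
Local Notation q := #|F|.



Lemma fiber_card m k (M : 'M[F]_(m, k)) (S : pred 'cV[F]_m) :
  row_free M ->
  #|[pred g : 'cV[F]_k | M *m g \in S]| = (#|S| * #|[pred g : 'cV[F]_k | M *m g == 0%R]|)%N.
Proof.
case/row_freeP=> B MB.
pose psi (g : 'cV[F]_k) := (M *m g, g - B *m (M *m g)).
have psi_inj : injective psi.
  move=> g1 g2 [e1 e2]; move: e2; rewrite e1 => /(congr1 (fun x => x + B *m (M *m g2))).
  by rewrite !subrK.
rewrite -(card_imset (mem [pred g | M *m g \in S]) psi_inj).
rewrite -[#|S|]cardsE -[#|[pred g | _ == _]|]cardsE -cardsX; apply: eq_card => -[s h].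
rewrite !inE /=; apply/imsetP/andP => [[g gS [-> ->]]|[sS /eqP hK]].
  by split=> //; rewrite mulmxBr mulmxA MB mul1mx subrr.
exists (B *m s + h).
  by rewrite unfold_in /= mulmxDr mulmxA MB mul1mx hK addr0.
have E : M *m (B *m s + h) = s.
  by rewrite (mulmxDr M (B *m s) h) mulmxA MB mul1mx hK addr0.
by rewrite /psi /= E addrAC subrr add0r.

Qed.


Lemma fiber_count m k (M : 'M[F]_(m, k)) (S : pred 'cV[F]_m) :
  row_free M ->
  (#|[pred g : 'cV[F]_k | M *m g \in S]| * q ^ m = #|S| * q ^ k)%N.
Proof.
move=> rM; have := fiber_card [pred x | true] rM.
have -> : #|[pred g : 'cV[F]_k | M *m g \in [pred x | true]]| = #|{: 'cV[F]_k}|.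
  by apply: eq_card => g.
have -> : #|[pred x : 'cV[F]_m | true]| = #|{: 'cV[F]_m}| by apply: eq_card.
rewrite !card_mx !muln1 => E.
by rewrite (fiber_card S rM) -mulnA [(_ * q ^ m)%N]mulnC E.
Qed.

Lemma card_cols k n (A : pred 'cV[F]_k) :
  #|[pred G : 'M[F]_(k, n) | [forall j, col j G \in A]]| = (#|A| ^ n)%N.
Proof.
pose mk (f : {ffun 'I_n -> 'cV[F]_k}) : 'M[F]_(k, n) := \matrix_(i, j) f j i 0.
have mk_inj : injective mk.
  move=> f1 f2 e; apply/ffunP => j; apply/matrixP => i z.
  by rewrite ord1; have := congr1 (fun M : 'M[F]_(k, n) => M i j) e; rewrite !mxE.
rewrite -[X in (_ ^ X)%N]card_ord -card_ffun_on -(card_imset _ mk_inj).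
apply: eq_card => G; rewrite inE /=; apply/forallP/imsetP => [H|[f fA ->] j].
  exists [ffun j => col j G].
    by apply/ffun_onP => j; rewrite ffunE; apply: H.
  by apply/matrixP => i j; rewrite !mxE ffunE mxE.
have -> : col j (mk f) = f j by apply/matrixP => i z; rewrite ord1 !mxE.
exact: (ffun_onP fA).
Qed.

Lemma card_S2 :
  #|[pred h : 'cV[F]_2 | (h 0 0 == 0) ==> (h 1 0 == 0)]| = (q * q - q + 1)%N.
Proof.
pose f (h : 'cV[F]_2) := (h 0 0, h 1 0).
have f_inj : injective f.
  move=> h1 h2 [e1 e2]; apply/matrixP => i j; rewrite ord1.
  by case: i => -[|[|//]] Hi; [move: e1 | move: e2]; congr (_ = _); congr (_ _ _); apply: val_inj.
rewrite -(card_imset _ f_inj).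
have -> : #|f @: [pred h : 'cV[F]_2 | (h 0 0 == 0) ==> (h 1 0 == 0)]| =
          #|[pred p : F * F | (p.1 == 0) ==> (p.2 == 0)]|.
  apply: eq_card => -[a b]; rewrite inE /=; apply/imsetP/idP => [[h hP [-> ->]] //|H].
  exists (\col_i (if i == 0 then a else b)); first by rewrite unfold_in /= !mxE.
  by rewrite /f !mxE.
rewrite -sum1_card.
rewrite (eq_bigl (fun p : F * F => (p.1 == 0) ==> (p.2 == 0))) //.
rewrite big_mkcond /= -(pair_big predT predT (fun a b => if (a == 0) ==> (b == 0) then 1%N else 0%N)) /=.
rewrite (bigD1 0) //= eqxx /=.
rewrite (eq_bigr (fun b => if b == 0 then 1%N else 0%N)); last by move=> b _; case: (b == 0).
rewrite -big_mkcond /= big_pred1_eq.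
rewrite (eq_bigr (fun _ => q)); last first.
  move=> a /negbTE ->; rewrite /= (eq_bigr (fun _ => 1%N)) ?sum1_card //.
rewrite sum_nat_const cardC1 /= mulnC.
have q0 : (0 < q)%N by apply/card_gt0P; exists 0.
by case: #|F| q0 => // n _; rewrite /= mulnS addnC [(n.+1 + _)%N]addnC addnK.
Qed.


Definition indep k (u v : 'rV[F]_k) : bool :=
  [forall a : F, forall b : F, ((a != 0) || (b != 0)) ==> (a *: u + b *: v != 0)].

Definition badP k n (u v : 'rV[F]_k) (G : 'M[F]_(k, n)) : bool :=
  [forall j, ((u *m G) 0 j == 0) ==> ((v *m G) 0 j == 0)].

Lemma col_mx00 (X Y : 'M[F]_(1, 1)) : col_mx X Y 0 0 = X 0 0.
Proof. by rewrite (_ : (0 : 'I_2) = @lshift 1 1 0) ?col_mxEu //; apply: val_inj. Qed.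

Lemma col_mx10 (X Y : 'M[F]_(1, 1)) : col_mx X Y 1 0 = Y 0 0.
Proof. by rewrite (_ : (1 : 'I_2) = @rshift 1 1 0) ?col_mxEd //; apply: val_inj. Qed.

Lemma indep_row_free k (u v : 'rV[F]_k) : indep u v -> row_free (col_mx u v).
Proof.
move=> iuv; rewrite -kermx_eq0; apply/negPn/negP => /rowV0Pn [w /sub_kermxP wK w0].
pose a := w 0 (lshift 1 0); pose b := w 0 (rshift 1 0).
have E : w *m col_mx u v = a *: u + b *: v.
  rewrite -[w]hsubmxK mul_row_col [lsubmx w]mx11_scalar [rsubmx w]mx11_scalar.
  by rewrite !mul_scalar_mx !mxE.
have ab : (a != 0) || (b != 0).
  apply: contraR w0; rewrite negb_or !negbK => /andP[/eqP a0 /eqP b0].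
  apply/eqP/matrixP => i j; rewrite ord1 mxE.
  case: j => -[|[|//]] Hj.
    by rewrite -[X in w 0 X](_ : lshift 1 0 = _) //; apply: val_inj.
  by rewrite -[X in w 0 X](_ : rshift 1 0 = _) //; apply: val_inj.
by move: iuv => /forallP/(_ a)/forallP/(_ b); rewrite ab /= -E wK eqxx.
Qed.

Lemma rV_row_free k (u : 'rV[F]_k) : u != 0 -> row_free u.
Proof. by move=> u0; rewrite /row_free rank_rV u0. Qed.

Lemma entry_col k n (u : 'rV[F]_k) (G : 'M[F]_(k, n)) j :
  (u *m G) 0 j = (u *m col j G) 0 0.
Proof. by rewrite colE mulmxA -colE [RHS]mxE. Qed.


Lemma q_gt0 : (0 < q)%N.
Proof. by apply/card_gt0P; exists 0. Qed.

Lemma card_badP k' n (u v : 'rV[F]_k'.+2) : indep u v ->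
  #|[pred G : 'M[F]_(k'.+2, n) | badP u v G]| = (((q * q - q + 1) * q ^ k') ^ n)%N.
Proof.
move=> iuv.
pose S2 := [pred h : 'cV[F]_2 | (h 0 0 == 0) ==> (h 1 0 == 0)].
pose A := [pred g : 'cV[F]_k'.+2 | col_mx u v *m g \in S2].
have -> : #|[pred G : 'M[F]_(k'.+2, n) | badP u v G]| =
          #|[pred G : 'M[F]_(k'.+2, n) | [forall j, col j G \in A]]|.
  apply: eq_card => G; rewrite !unfold_in /= /badP; apply: eq_forallb => j.
  by rewrite (entry_col u) (entry_col v) /A /S2 !unfold_in /= mul_col_mx inE /= col_mx00 col_mx10.
rewrite card_cols; congr (_ ^ n)%N.
have := fiber_count S2 (indep_row_free iuv).
rewrite (_ : #|S2| = (q * q - q + 1)%N); last exact: card_S2.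
move=> E; apply/eqP; rewrite -(eqn_pmul2r (_ : 0 < q ^ 2)%N) ?expn_gt0 ?q_gt0 //.
by rewrite E -mulnA -expnD addn2.
Qed.


Lemma row0E n (x : 'M[F]_(1, n)) : (x == 0) = [forall j, x 0 j == 0].
Proof.
apply/eqP/forallP => [-> j|H]; first by rewrite mxE.
by apply/matrixP => i j; rewrite ord1 mxE; apply/eqP/H.
Qed.

Lemma card_deg k n (u : 'rV[F]_k.+1) : u != 0 ->
  #|[pred G : 'M[F]_(k.+1, n) | u *m G == 0]| = ((q ^ k) ^ n)%N.
Proof.
move=> u0.
pose S1 := [pred h : 'cV[F]_1 | h 0 0 == 0].
pose A := [pred g : 'cV[F]_k.+1 | u *m g \in S1].
have -> : #|[pred G : 'M[F]_(k.+1, n) | u *m G == 0]| =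
          #|[pred G : 'M[F]_(k.+1, n) | [forall j, col j G \in A]]|.
  apply: eq_card => G; rewrite !unfold_in /= row0E; apply: eq_forallb => j.
  by rewrite (entry_col u) /A /S1 !unfold_in /= inE.
rewrite card_cols; congr (_ ^ n)%N.
have := fiber_count S1 (rV_row_free u0).
have -> : #|S1| = 1%N.
  apply: (etrans _ (card1 (0 : 'cV[F]_1))); apply: eq_card => h; rewrite !unfold_in /=.
  by rewrite [in RHS]row0E; apply/eqP/forallP => [h0 j|/(_ 0) /eqP //]; rewrite ord1 h0.
rewrite mul1n expn1 expnS mulnC => E.
by apply/eqP; rewrite -(eqn_pmul2l q_gt0) E.
Qed.


Lemma union_bound (I T : finType) (P : I -> pred T) :
  (#|[pred x | [exists i, P i x]]| <= \sum_i #|[pred x | P i x]|)%N.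
Proof.
have E i : #|[pred x | P i x]| = \sum_x (P i x : nat).
  by rewrite -sum1_card big_mkcond /=; apply: eq_bigr => x _; rewrite unfold_in /=; case: (P i x).
under eq_bigr do rewrite E.
rewrite exchange_big /= -sum1_card big_mkcond /=.
apply: leq_sum => x _; rewrite unfold_in /=.
case: existsP => [[i Pi]|//].
by rewrite (bigD1 i) //= Pi.
Qed.

Lemma card_lt_exists (T : finType) (P : pred T) :
  (#|[pred x | P x]| < #|T|)%N -> exists x, ~~ P x.
Proof.
move=> lt; apply/existsP; rewrite -negb_forall; apply/negP => /forallP H.
have : #|[pred x | P x]| = #|T| by apply: eq_card => x; rewrite unfold_in /= H.
by move=> E; rewrite E ltnn in lt.
Qed.

Lemma exists_good k' n :
  (q ^ (2 * k'.+2) * ((q * q - q + 1) * q ^ k') ^ n + q ^ k'.+2 * (q ^ k'.+1) ^ n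
     < q ^ (k'.+2 * n))%N ->
  exists G : 'M[F]_(k'.+2, n),
    (forall u v : 'rV[F]_k'.+2, indep u v -> ~~ badP u v G) /\ (forall u : 'rV[F]_k'.+2, u != 0 -> u *m G != 0).
Proof.
move=> H.
pose P1 (uv : 'rV[F]_k'.+2 * 'rV[F]_k'.+2) := [pred G : 'M[F]_(k'.+2, n) | indep uv.1 uv.2 && badP uv.1 uv.2 G].
pose P2 (u : 'rV[F]_k'.+2) := [pred G : 'M[F]_(k'.+2, n) | (u != 0) && (u *m G == 0)].
pose bad := [pred G | [exists uv, P1 uv G] || [exists u, P2 u G]].
have [G] : exists G, ~~ bad G.
  apply: card_lt_exists; rewrite card_mx; apply: leq_ltn_trans H.
  apply: leq_trans (_ : #|[pred G | [exists uv, P1 uv G]]| + #|[pred G | [exists u, P2 u G]]| <= _)%N.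
    rewrite -(cardsE [pred G | _]) -(cardsE [pred G | [exists uv, P1 uv G]]) -(cardsE [pred G | [exists u, P2 u G]]).
    apply: leq_trans (leq_card_setU _ _); apply: subset_leq_card; apply/fintype.subsetP => G.
    by rewrite !inE.
  apply: leq_add.
    apply: leq_trans (union_bound P1) _.
    apply: leq_trans (_ : \sum_(uv : 'rV[F]_k'.+2 * 'rV[F]_k'.+2) (((q * q - q + 1) * q ^ k') ^ n) <= _)%N.
      apply: leq_sum => -[u v] _.
      case iuv : (indep u v).
        rewrite -(card_badP n iuv); apply: subset_leq_card; apply/fintype.subsetP => G.
        by rewrite !unfold_in /= iuv.
      rewrite (_ : #|_| = 0%N) //; apply: eq_card0 => G; rewrite !unfold_in /= iuv.
      done.
    by rewrite sum_nat_const card_prod !card_mx mul1n -expnD addnn -mul2n.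
  apply: leq_trans (union_bound P2) _.
  apply: leq_trans (_ : \sum_(u : 'rV[F]_k'.+2) ((q ^ k'.+1) ^ n) <= _)%N.
    apply: leq_sum => u _.
    case u0 : (u != 0).
      rewrite -(card_deg n u0); apply: subset_leq_card; apply/fintype.subsetP => G.
      by rewrite !unfold_in /= u0.
    rewrite (_ : #|_| = 0%N) //; apply: eq_card0 => G; rewrite !unfold_in /= u0.
    done.
  by rewrite sum_nat_const !card_mx mul1n.
rewrite /bad /= negb_or => /andP[/existsPn H1 /existsPn H2].
exists G; split.
  by move=> u v iuv; move: (H1 (u, v)); rewrite /P1 /= iuv.
by move=> u u0; move: (H2 u); rewrite /P2 /= u0.
Qed.

End Comb.


Lemma code_of_good (F : finFieldType) k n (G : 'M[F]_(k, n)) :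
  (forall u v : 'rV[F]_k, indep u v -> ~~ badP u v G) ->
  (forall u : 'rV[F]_k, u != 0 -> u *m G != 0) ->
  exists C : {vspace 'rV[F]_n}, minimal_code C /\ \dim C = k.
Proof.
move=> H1 H2.
pose f : 'Hom('rV[F]_k, 'rV[F]_n) := linfun (mulmxr G).
have fE u : f u = u *m G by rewrite lfunE.
have inC c : c \in limg f -> exists u, c = u *m G.
  by case/memv_imgP => u _ ->; exists u; rewrite fE.
exists (limg f); split.
  move=> c cC c0; split => // c' c'C sub.
  have [u cu] := inC c cC; have [v cv] := inC c' c'C; subst c c'.
  apply: contrapT => nd.
  have iuv : indep u v.
    apply/forallP => a; apply/forallP => b; apply/implyP => ab; apply/eqP => e.
    apply: nd; exists a, b; split => //.
    by rewrite !scalemxAl -mulmxDl e mul0mx.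
  have := H1 u v iuv; rewrite /badP negb_forall => /existsP [j].
  rewrite negb_imply => /andP [/eqP uj vj].
  have : j \in supp (v *m G) by rewrite inE.
  by move/(fintype.subsetP sub); rewrite inE uj eqxx.
have inj : injective f.
  move=> x y; rewrite !fE => /eqP; rewrite -subr_eq0 -mulmxBl => /eqP e.
  apply/eqP; rewrite -subr_eq0; apply/negPn/negP => ne; by move: (H2 _ ne); rewrite e eqxx.

rewrite limg_dim_eq; last by rewrite capfv; apply/eqP/lker0P.
by rewrite dimvf /dim /= mul1n.
Qed.

Lemma nat_ineq (q c k' n : nat) : (2 <= q)%N -> (1 <= c)%N ->
  (q ^ (2 * k'.+3) * c ^ n <= q ^ (2 * n))%N ->
  (q ^ (2 * k'.+2) * (c * q ^ k') ^ n + q ^ k'.+2 * (q ^ k'.+1) ^ n < q ^ (k'.+2 * n))%N.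
Proof.
move=> q2 c1 H.
have q0 : (0 < q)%N by apply: leq_trans q2.
have hk : (k'.+3 <= n)%N.
  have : (q ^ (2 * k'.+3) <= q ^ (2 * n))%N.
    apply: leq_trans H; rewrite leq_pmulr // expn_gt0; by case: c c1.
  rewrite (leq_exp2l _ _ q2); lia.
set X := (q ^ (k' * n))%N; set Q := (q ^ (2 * n))%N.
have E1 : ((c * q ^ k') ^ n = c ^ n * X)%N by rewrite expnMn -expnM.
have E2 : ((q ^ k'.+1) ^ n = q ^ n * X)%N by rewrite -expnM -expnD mulSn.
have E3 : (q ^ (k'.+2 * n) = Q * X)%N by rewrite -expnD mulSn mulSn addnA addnn -mul2n.
rewrite E1 E2 E3.
set A := (q ^ (2 * k'.+2) * c ^ n)%N.
have hA : (4 * A <= Q)%N.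
  apply: leq_trans H; rewrite (_ : (2 * k'.+3 = 2 + 2 * k'.+2)%N); last lia.
  rewrite expnD /A mulnA; apply: leq_mul => //; apply: leq_mul => //.
  by rewrite expnS expn1 (leq_mul q2 q2).
have hB : (2 * (q ^ k'.+2 * q ^ n) <= Q)%N.
  apply: leq_trans (_ : q ^ k'.+3 * q ^ n <= Q)%N.
    by rewrite mulnA leq_mul2r [(q ^ k'.+3)%N]expnS leq_mul2r q2 !orbT.
  by rewrite /Q -expnD (leq_exp2l _ _ q2); lia.
have X0 : (0 < X)%N by rewrite expn_gt0 q0.
have Q0 : (0 < Q)%N by rewrite expn_gt0 q0.
rewrite mulnA mulnA -mulnDl ltn_pmul2r //.
rewrite -/A; lia.
Qed.

Lemma real_key (T : realType) (q k n : nat) : (1 < q)%N ->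
  (k.+1)%:R <= n%:R * rate_bound T q ->
  (q ^ (2 * k.+1) * (q * q - q + 1) ^ n <= q ^ (2 * n))%N.
Proof.
move=> q1 H.
set Q : T := q%:R.
have Q1 : 1 < Q by rewrite ltr1n.
have Q0 : 0 < Q by apply: lt_trans Q1.
have cE : Q ^+ 2 - Q + 1 = (q * q - q + 1)%:R.
  by rewrite natrD natrB ?natrM ?expr2 // leq_pmulr // ltnW.
have c0 : 0 < Q ^+ 2 - Q + 1 by rewrite cE ltr0n addn1.
set L := ln Q; set Lc := ln (Q ^+ 2 - Q + 1).
have L0 : 0 < L by apply: ln_gt0.
have hb : rate_bound T q = 2^-1 * ((2 * L - Lc) / L).
  rewrite /rate_bound /logb -/Q ln_div ?posrE ?exprn_gt0 //.
  rewrite lnXn // -/L -/Lc; congr (_ * ((_ - _) / _)); lra.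
rewrite hb in H.
have H2 : (k.+1)%:R * (2 * L) <= n%:R * (2 * L - Lc).
  have := H; rewrite -(ler_pM2r (_ : 0 < 2 * L)); last by rewrite mulr_gt0.
  move=> /le_trans; apply; rewrite le_eqVlt; apply/orP; left; apply/eqP.
  have E (a b m : T) : 0 < a -> m * (2^-1 * ((2 * a - b) / a)) * (2 * a) = m * (2 * a - b).
    by move=> a0; field; rewrite gt_eqF.
  exact: E.
rewrite -(ler_nat T) !natrM !natrX -cE -/Q.
rewrite -ler_ln ?posrE ?mulr_gt0 ?exprn_gt0 //.
rewrite lnM ?posrE ?exprn_gt0 // !lnXn // -/L -/Lc.
rewrite -[L *+ (2 * k.+1)]mulr_natl -[Lc *+ n]mulr_natl -[L *+ (2 * n)]mulr_natl !natrM.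
have aux (a b x y : T) : x * (2 * a) <= y * (2 * a - b) -> 2 * x * a + y * b <= 2 * y * a.
  by move=> h; nra.
exact: aux.
Qed.

Lemma conv_aux (T : realType) (R e n y : T) : 0 < e -> 3 / e < n ->
  y <= n * R -> n * R - 3 <= y -> `|R - y / n| <= e.
Proof.
move=> e0 he h1 h2.
have n0 : 0 < n by apply: lt_trans he; rewrite divr_gt0.
have he' : 3 < n * e by rewrite -ltr_pdivrMr.
have -> : R - y / n = (n * R - y) / n by field; rewrite gt_eqF.
rewrite normrM normfV (gtr0_norm n0) ler_pdivrMr // ler_norml; apply/andP; split; nra.
Qed.

Lemma q_gt1 (F : finFieldType) : (1 < #|F|)%N.
Proof. by apply/card_gt1P; exists 0, 1; rewrite !inE eq_sym oner_neq0. Qed.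


End Helpers.

Local Open Scope classical_set_scope.
Local Open Scope ring_scope.

Theorem mainTheorem2 (T : realType) (F : finFieldType) (R : T) :
  0 <= R -> R <= rate_bound T #|F| ->
  exists (n : nat -> nat) (C : forall i : nat, {vspace 'rV[F]_(n i)}),
    {homo n : i j / (i < j)%N} /\
    (forall i, minimal_code (C i)) /\
    (forall i, rate T (C i) <= rate_bound T #|F|) /\
    ((fun i => rate T (C i)) @ \oo --> R).
Proof.
move=> R0 Rb.
pose kk (i : nat) : nat :=
  let t := Num.truncn ((i.+1)%:R * R) in if (3 <= t)%N then t.-1 else 0%N.
have kkb i : (kk i)%:R <= (i.+1)%:R * R /\ (i.+1)%:R * R - 3 <= (kk i)%:R.
  have x0 : 0 <= (i.+1)%:R * R :> T by rewrite mulr_ge0.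
  have /andP[t1 t2] := truncn_itv x0.
  rewrite /kk /=; case: ifP => t3.
    split; first by apply: le_trans t1; rewrite ler_nat leq_pred.
    move: t2 t3; case: (Num.truncn _) => // t; rewrite /= -!natr1 => t2 _; lra.
  split => //; move: t2 t3; case: (Num.truncn _) => [|[|[|t]]] //= t2 _; move: t2;
    rewrite -?natr1; lra.
have codes i : exists C : {vspace 'rV[F]_(i.+1)}, minimal_code C /\ \dim C = kk i.
  rewrite /kk /=; case: ifP => t3.
    have [k' tE] : exists k', Num.truncn ((i.+1)%:R * R : T) = k'.+3.
      by exists (Num.truncn ((i.+1)%:R * R : T) - 3)%N; lia.
    rewrite tE /=.
    have rk : (k'.+3)%:R <= (i.+1)%:R * rate_bound T #|F|.
      rewrite -tE; apply: (@le_trans _ _ ((i.+1)%:R * R)).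
        by rewrite truncn_le mulr_ge0.
      by rewrite ler_wpM2l.
    have hq := real_key (q_gt1 F) rk.
    have c1 : (1 <= #|F| * #|F| - #|F| + 1)%N by rewrite addn1.
    have [G [G1 G2]] := exists_good (nat_ineq (q_gt1 F) c1 hq).
    exact: code_of_good G1 G2.
  exists 0%VS; split; last by rewrite dimv0.
  by move=> c; rewrite memv0 => ->.
pose C i := proj1_sig (cid (codes i)).
have CP i : minimal_code (C i) /\ \dim (C i) = kk i := proj2_sig (cid (codes i)).
exists (fun i => i.+1), C; split; first by move=> i j.
split; first by move=> i; exact: (CP i).1.
split.
  move=> i; rewrite /rate (CP i).2 ler_pdivrMr ?ltr0n //.
  apply: le_trans (kkb i).1 _; rewrite mulrC; apply: ler_wpM2r => //.
apply/cvgrPdist_le => e e0.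
apply: filterS (nbhs_infty_gtr (3 / e)) => i Hi.
rewrite /rate (CP i).2; apply: conv_aux => //; try by case: (kkb i).
by apply: lt_trans Hi _; rewrite ltr_nat.
Qed.
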